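(* Algorithm 1 is monotonic. Moreover, for a connected graph $G$ with $n\ge2$ nodes, diameter $D$, nonnegative real loads with initial discrepancy $K>0$, and any $\epsilon>0$, after at most $(2nD+1)\ln(\lceil 2nK^2/\epsilon^2\rceil)$ rounds (hence $O(nD\log(nK/\epsilon))$ time, each round taking a constant number of communication steps; the paper states the bound $(6n+3)D\ln(\lceil nK^2/(\epsilon^2/2)\rceil)$ time units) the discrepancy of $G$ is at most $\epsilon$, and it remains at most $\epsilon$ thereafter.
   Context: $G=(V,E)$ is an undirected connected graph, $n=|V|$, $D$ its diameter; each node $u$ holds a load $load(u)\ge 0$ (real). $L_{max},L_{min}$ denote the current maximum and minimum load and the discrepancy is $K=L_{max}-L_{min}$. Algorithm 1 (single proposal, continuous) proceeds in synchronous rounds; in each round, using the loads at the start of the round: (1) every node $u$ having at least one neighbor with strictly smaller load picks a neighbor $v$ maximizing $load(u)-load(v)$ (ties broken arbitrarily) and sends $v$ a proposal of value $p_{uv}=(load(u)-load(v))/2$; (2) every node that received at least one proposal accepts exactly one proposal of maximum value (ties arbitrary); (3) all accepted transfers are executed simultaneously (each accepted proposal $p_{wu}$ moves $p_{wu}$ from $w$ to $u$), and nodes report their new loads to neighbors. An algorithm is monotonic if in every execution (a) each load transfer goes from a higher-loaded node to a less-loaded one, and (b) the maximum load never increases and the minimum load never decreases. *)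

(* Defs.v *)
From HB Require Import structures.
From mathcomp Require Import all_boot all_order all_algebra.
From mathcomp Require Import all_classical all_reals all_analysis.
Set Implicit Arguments. Unset Strict Implicit. Unset Printing Implicit Defensive.
Import Order.TTheory GRing.Theory Num.Theory.
Local Open Scope ring_scope.

Section Defs.
Variables (R : realType) (V : finType) (e : rel V).

Definition dist_le (u v : V) (k : nat) : Prop :=
  exists p : seq V, [&& path e u p, last u p == v & (size p <= k)%N].

Definition is_diameter (D : nat) : Prop :=
  (forall u v, dist_le u v D) /\
  (forall D', (forall u v, dist_le u v D') -> (D <= D')%N).

(* discrepancy K = Lmax - Lmin = max over pairs (u,v) of load u - load v
   (default 0 is harmless since the pair (u,u) gives 0) *)
Definition disc (x : V -> R) : R :=
  \big[Num.max/0]_(u : V) \big[Num.max/0]_(v : V) (x u - x v).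

(* One round of Algorithm 1 from loads x to loads y, where
   pr u = Some v : u proposes to v,
   ac v = Some w : v accepts the proposal of w. *)
Definition round (x : V -> R) (pr ac : V -> option V) (y : V -> R) : Prop :=
  (forall u, (exists v, e u v /\ x v < x u) <-> pr u <> None) /\
  (forall u v, pr u = Some v ->
     e u v /\ forall w, e u w -> x u - x w <= x u - x v) /\
  (forall v, (exists w, pr w = Some v) -> ac v <> None) /\
  (forall v w, ac v = Some w ->
     pr w = Some v /\
     forall w', pr w' = Some v -> (x w' - x v) / 2 <= (x w - x v) / 2) /\
  (forall u,
     y u = x u
           - (match pr u with
              | Some v => if ac v == Some u then (x u - x v) / 2 else 0
              | None => 0 end)
           + (match ac u with
              | Some w => (x w - x u) / 2
              | None => 0 end)).

(* an execution: loads x t at the start of round t, with the choices made *)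
Definition execution (x : nat -> V -> R) (pr ac : nat -> V -> option V) : Prop :=
  forall t, round (x t) (pr t) (ac t) (x t.+1).

Definition monotonic (x : nat -> V -> R) (pr ac : nat -> V -> option V) : Prop :=
  (forall t u v, pr t u = Some v -> ac t v = Some u -> x t v < x t u) /\
  (* (b) max load never increases: Lmax (x t.+1) <= Lmax (x t) *)
  (forall t w, exists u, x t.+1 w <= x t u) /\
  (* min load never decreases: Lmin (x t) <= Lmin (x t.+1) *)
  (forall t w, exists u, x t u <= x t.+1 w).

End Defs.

(* Main.v *)
Require Import Defs.
From HB Require Import structures.
From mathcomp Require Import all_boot all_order all_algebra.
From mathcomp Require Import all_classical all_reals all_analysis.
From mathcomp Require Import ring lra zify.
Import Order.TTheory GRing.Theory Num.Theory.
Local Open Scope ring_scope.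

Lemma single {R : realType} {V : finType} {F : V -> R} {v0} :
  (forall v, v != v0 -> F v = 0) -> \sum_v F v = F v0.
Proof. by move=> H; rewrite (bigD1 v0) //= big1 ?addr0 // => v /H. Qed.

Section Round.
Variables (R : realType) (V : finType) (e : rel V).
Variables (x : V -> R) (pr ac : V -> option V) (y : V -> R).
Hypothesis Hr : round e x pr ac y.

Lemma pr_lt {u v} : pr u = Some v -> x v < x u.
Proof.
case: Hr => H1 [H2 _] E.
have [w [ew lw]] : exists w, e u w /\ x w < x u by apply/H1; rewrite E.
have := (H2 u v E).2 w ew; lra.
Qed.

Lemma pr_edge {u v} : pr u = Some v -> e u v.
Proof. by case: Hr => _ [H2 _] E; case: (H2 u v E). Qed.

Lemma ac_pr {v w} : ac v = Some w -> pr w = Some v.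
Proof. by case: Hr => _ [_ [_ [H4 _]]] E; case: (H4 v w E). Qed.

Lemma ac_lt {v w} : ac v = Some w -> x v < x w.
Proof. by move=> /ac_pr /pr_lt. Qed.

Definition T u v := if (pr u == Some v) && (ac v == Some u) then (x u - x v)/2 else 0.
Definition out u := match pr u with Some v => if ac v == Some u then (x u - x v)/2 else 0 | None => 0 end.
Definition inn u := match ac u with Some w => (x w - x u)/2 | None => 0 end.

Lemma T_ge0 u v : 0 <= T u v.
Proof.
rewrite /T; case: ifP => // /andP [/eqP E _]; have := pr_lt E; lra.
Qed.

Lemma T_mul u v : T u v * (x u - x v) = 2 * T u v ^+ 2.
Proof. rewrite /T; case: ifP => _; [by field | by rewrite mul0r expr0n /= mulr0]. Qed.

Lemma out_ge0 u : 0 <= out u.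
Proof. rewrite /out; case E: (pr u) => [v|] //; case: ifP => // _; have := pr_lt E; lra. Qed.

Lemma inn_ge0 u : 0 <= inn u.
Proof. rewrite /inn; case E: (ac u) => [w|] //; have := ac_lt E; lra. Qed.

Lemma out_sum u : out u = \sum_v T u v /\ out u ^+ 2 = \sum_v T u v ^+ 2.
Proof.
rewrite /out; case E: (pr u) => [v0|].
  have H : forall v, v != v0 -> T u v = 0.
    by move=> v nv; rewrite /T E; case: eqP => // [[]] Ev; rewrite Ev eqxx in nv.
  rewrite (single H) (single (F:=fun v => T u v ^+ 2) (v0:=v0)).
    by rewrite /T E eqxx.
  by move=> v /H ->; rewrite expr0n.
have H : forall v, T u v = 0 by move=> v; rewrite /T E.
by split; rewrite big1 ?expr0n // => v _; rewrite H ?expr0n.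
Qed.

Lemma inn_sum v : inn v = \sum_u T u v /\ inn v ^+ 2 = \sum_u T u v ^+ 2.
Proof.
rewrite /inn; case E: (ac v) => [w|].
  have H : forall u, u != w -> T u v = 0.
    move=> u nu; rewrite /T E; have -> : (Some w == Some u) = false by apply/eqP => -[Ew]; rewrite Ew eqxx in nu.
    by rewrite andbF.
  rewrite (single H) (single (F:=fun u => T u v ^+ 2) (v0:=w)).
    by rewrite /T E (ac_pr E) !eqxx.
  by move=> u /H ->; rewrite expr0n.
have H : forall u, T u v = 0 by move=> u; rewrite /T E andbF.
by split; rewrite big1 ?expr0n // => u _; rewrite H ?expr0n.
Qed.

Lemma y_eq u : y u = x u - out u + inn u.
Proof. by case: Hr => _ [_ [_ [_ H5]]]; rewrite H5. Qed.

Lemma sum_y : \sum_u y u = \sum_u x u.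
Proof.
under eq_bigr do rewrite y_eq.
rewrite big_split big_split /= sumrN.
have -> : \sum_u out u = \sum_u inn u.
  under eq_bigr do rewrite (out_sum _).1.
  rewrite exchange_big /=.
  by apply: eq_bigr => v _; rewrite (inn_sum v).1.
by rewrite addrNK.
Qed.

Lemma drop_sq : 2 * \sum_v inn v ^+ 2 <= \sum_u x u ^+ 2 - \sum_u y u ^+ 2.
Proof.
set S := \sum_u \sum_v T u v ^+ 2.
have Hi : \sum_v inn v ^+ 2 = S.
  under eq_bigr do rewrite (inn_sum _).2.
  by rewrite exchange_big.
have Ho : \sum_u out u ^+ 2 = S.
  by under eq_bigr do rewrite (out_sum _).2.
have Hxd : \sum_u x u * (out u - inn u) = 2 * S.
  have -> : \sum_u x u * (out u - inn u) = \sum_u \sum_v T u v * (x u - x v).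
    under eq_bigr do rewrite mulrBr.
    rewrite sumrB.
    under eq_bigr do rewrite (out_sum _).1 mulr_sumr.
    under [X in _ - X = _]eq_bigr do rewrite (inn_sum _).1 mulr_sumr.
    rewrite [X in _ - X]exchange_big /= -sumrB.
    apply: eq_bigr => u _; rewrite -sumrB; apply: eq_bigr => v _; ring.
  rewrite /S mulr_sumr; apply: eq_bigr => u _; rewrite mulr_sumr.
  by apply: eq_bigr => v _; rewrite T_mul.
have Hd : \sum_u (out u - inn u) ^+ 2 <= \sum_u (out u ^+ 2 + inn u ^+ 2).
  apply: ler_sum => u _; have := out_ge0 u; have := inn_ge0 u; nra.
have -> : \sum_u x u ^+ 2 - \sum_u y u ^+ 2 =
   2 * \sum_u x u * (out u - inn u) - \sum_u (out u - inn u) ^+ 2.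
  rewrite -sumrB mulr_sumr -sumrB; apply: eq_bigr => u _; rewrite y_eq; ring.
rewrite big_split /= in Hd; lra.
Qed.

End Round.
Arguments inn {R V} x ac u.
Arguments out {R V} x pr ac u.
Section Disc.
Variables (R : realType) (V : finType).
Implicit Types x : V -> R.

Lemma disc_le x u v : x u - x v <= disc x.
Proof.
rewrite /disc (bigD1 u) //= le_max; apply/orP; left.
by rewrite (bigD1 v) //= le_max lexx.
Qed.

Lemma disc_ub x c : 0 <= c -> (forall u v, x u - x v <= c) -> disc x <= c.
Proof.
move=> c0 H; rewrite /disc; apply: (big_ind (fun m => m <= c)) => //.
  by move=> p q hp hq; rewrite ge_max hp hq.
move=> u _; apply: (big_ind (fun m => m <= c)) => //.
by move=> p q hp hq; rewrite ge_max hp hq.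
Qed.

Lemma extr x (i0 : V) : exists a b, (forall u, x u <= x a) /\ (forall u, x b <= x u).
Proof.
case: (@arg_maxP _ R V i0 xpredT x isT) => a _ Ha.
case: (@arg_minP _ R V i0 xpredT x isT) => b _ Hb.
by exists a, b; split=> u; [apply: Ha | apply: Hb].
Qed.

Lemma disc_eq x a b : (forall u, x u <= x a) -> (forall u, x b <= x u) ->
  disc x = x a - x b.
Proof.
move=> Ha Hb; apply/le_anti; rewrite disc_le andbT; apply: disc_ub.
  by rewrite subr_ge0.
by move=> u v; have := Ha u; have := Hb v; lra.
Qed.

Definition Phi x := \sum_u x u ^+ 2 - (\sum_u x u) ^+ 2 / #|V|%:R.

Lemma sum_shift x c : \sum_u (x u - c) ^+ 2 =
  \sum_u x u ^+ 2 - 2 * c * \sum_u x u + #|V|%:R * c ^+ 2.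
Proof.
have -> : \sum_u (x u - c) ^+ 2 = \sum_u (x u ^+ 2 - 2 * c * x u + c ^+ 2).
  by apply: eq_bigr => u _; ring.
by rewrite big_split sumrB /= -mulr_sumr sumr_const [#|V|%:R * _]mulr_natl.
Qed.

Lemma Phi_mean x : (0 < #|V|)%N ->
  Phi x = \sum_u (x u - (\sum_v x v) / #|V|%:R) ^+ 2.
Proof.
move=> n0; rewrite sum_shift /Phi.
have nz : #|V|%:R != 0 :> R by rewrite pnatr_eq0 -lt0n.
by field.
Qed.

Lemma Phi_ge0 x : (0 < #|V|)%N -> 0 <= Phi x.
Proof. by move=> n0; rewrite Phi_mean // sumr_ge0 // => u _; rewrite sqr_ge0. Qed.

Lemma Phi_le x a b : (0 < #|V|)%N -> (forall u, x u <= x a) -> (forall u, x b <= x u) ->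
  4 * Phi x <= #|V|%:R * (x a - x b) ^+ 2.
Proof.
move=> n0 Ha Hb; set c := (x a + x b) / 2.
have nz : 0 < #|V|%:R :> R by rewrite ltr0n.
have H1 : Phi x <= \sum_u (x u - c) ^+ 2.
  rewrite sum_shift /Phi.
  set S := \sum_u x u; set n := #|V|%:R.
  have -> : S ^+ 2 / n = (S ^+ 2 / n - 2 * c * S + n * c ^+ 2) + 2 * c * S - n * c ^+ 2 by ring.
  have : 0 <= S ^+ 2 / n - 2 * c * S + n * c ^+ 2.
    have -> : S ^+ 2 / n - 2 * c * S + n * c ^+ 2 = (S - n * c) ^+ 2 / n.
      by field; rewrite gt_eqF.
    by rewrite divr_ge0 ?sqr_ge0 ?ltW.
  lra.
have H2 : \sum_u (x u - c) ^+ 2 <= \sum_(u : V) ((x a - x b) ^+ 2 / 4).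
  apply: ler_sum => u _; have := Ha u; have := Hb u; rewrite /c; nra.
rewrite sumr_const -mulr_natl in H2.
have : 0 <= #|V|%:R :> R by exact: ltW.
move: H1 H2; set n := #|V|%:R; set K := (x a - x b) ^+ 2 => H1 H2 _.
have -> : n * K = 4 * (n * (K / 4)) by field.
lra.
Qed.

Lemma Phi_ge x a b : (0 < #|V|)%N -> a != b ->
  (x a - x b) ^+ 2 <= 2 * Phi x.
Proof.
move=> n0 ab; rewrite Phi_mean //; set m := _ / _.
rewrite (bigD1 a) //= (bigD1 b) //=; last by rewrite eq_sym.
have : 0 <= \sum_(i | (i != a) && (i != b)) (x i - m) ^+ 2.
  by rewrite sumr_ge0 // => u _; rewrite sqr_ge0.
have := sqr_ge0 (x a - m + (x b - m)). nra.
Qed.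

End Disc.
Arguments Phi {R V} x.
Arguments Phi_ge0 {R V} x.
Arguments Phi_le {R V x a b}.
Arguments extr {R V} x.
Arguments Phi_ge {R V} x {a b}.
Arguments disc_eq {R V x a b}.
Lemma last_take (T : Type) (x : T) (s : seq T) i : (i <= size s)%N ->
  last x (take i s) = nth x (x :: s) i.
Proof.
move=> hi; rewrite (last_nth x) size_takel //.
case: i hi => [|i] hi //=; rewrite nth_take //.
Qed.

Lemma minpath (V : finType) (e : rel V) a b k :
  (exists p, [&& path e a p, last a p == b & (size p <= k)%N]) ->
  exists p, [/\ path e a p, last a p = b, (size p <= k)%N &
    forall p', path e a p' -> last a p' = b -> (size p <= size p')%N].
Proof.
elim: k => [|k IH] [p /and3P [hp /eqP hl hs]].
  exists p; split=> // p' _ _; move: hs; rewrite leqn0 => /eqP ->; exact: leq0n.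
case: (boolp.EM (exists p, [&& path e a p, last a p == b & (size p <= k)%N])).
  by move=> /IH [q [h1 h2 h3 h4]]; exists q; split=> //; apply: leqW.
move=> nex; exists p; split=> // p' h1 h2; rewrite leqNgt; apply/negP => lt.
apply: nex; exists p'; rewrite h1 h2 eqxx /=; lia.
Qed.

Lemma shortcut (V : finType) (e : rel V) a p v i j :
  symmetric e -> path e a p -> (i + 3 <= j)%N -> (j <= size p)%N ->
  e (nth a (a :: p) i) v -> e (nth a (a :: p) j) v ->
  exists p', [/\ path e a p', last a p' = last a p & (size p' < size p)%N].
Proof.
move=> sym hp hij hj ei ej.
have hi : (i <= size p)%N by lia.
exists (take i p ++ v :: nth a (a :: p) j :: drop j p); split.
- rewrite cat_path last_take //= ei (sym v) ej /=.
  have := hp; rewrite -{1}(cat_take_drop i p) cat_path => /andP [-> _].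
  move: hp; rewrite -{1}(cat_take_drop j p) cat_path => /andP [_].
  by rewrite last_take.
- rewrite last_cat /= -(@last_take _ a p j hj) -last_cat cat_take_drop //.
- rewrite size_cat /= size_takel // size_drop; lia.
Qed.

Lemma count3 (Q : pred nat) k :
  (forall i j, (i + 3 <= j)%N -> (j < k)%N -> Q i -> Q j -> False) ->
  (count Q (iota 0 k) <= 3)%N.
Proof.
move=> H; rewrite -size_filter.
have so : sorted ltn (seq.filter Q (iota 0 k)) by apply: sorted_filter => //; [exact: ltn_trans | exact: iota_ltn_sorted].
have mem z : z \in seq.filter Q (iota 0 k) -> Q z /\ (z < k)%N.
  by rewrite mem_filter mem_iota add0n => /andP [-> /andP [_ ->]].
move: so mem; case: (seq.filter Q (iota 0 k)) => [|s0 [|s1 [|s2 [|s3 r]]]] //= so mem.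
move: so => /andP [l01 /andP [l12 /andP [l23 _]]].
have [q0 _] := mem s0 (mem_head _ _).
have [q3 h3] : Q s3 /\ (s3 < k)%N by apply: mem; rewrite !inE eqxx !orbT.
by exfalso; apply: (H s0 s3) => //; lia.
Qed.

Lemma CS (R : realType) (c : nat -> R) k :
  (\sum_(0 <= i < k) c i) ^+ 2 <= k%:R * \sum_(0 <= i < k) c i ^+ 2.
Proof.
have H : 0 <= \sum_(0 <= i < k) \sum_(0 <= j < k) (c i - c j) ^+ 2.
  by apply: sumr_ge0 => i _; apply: sumr_ge0 => j _; rewrite sqr_ge0.
have E : \sum_(0 <= i < k) \sum_(0 <= j < k) (c i - c j) ^+ 2 =
   2 * (k%:R * \sum_(0 <= i < k) c i ^+ 2) - 2 * (\sum_(0 <= i < k) c i) ^+ 2.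
  have -> : \sum_(0 <= i < k) \sum_(0 <= j < k) (c i - c j) ^+ 2 =
    \sum_(0 <= i < k) (k%:R * c i ^+ 2 + \sum_(0 <= j < k) c j ^+ 2
        - 2 * c i * \sum_(0 <= j < k) c j).
    apply: eq_bigr => i _.
    have -> : \sum_(0 <= j < k) (c i - c j) ^+ 2 =
       \sum_(0 <= j < k) (c i ^+ 2 + c j ^+ 2 - 2 * c i * c j).
      by apply: eq_bigr => j _; ring.
    rewrite sumrB big_split /= sumr_const_nat subn0 -mulr_sumr.
    by rewrite -[c i ^+ 2 *+ k]mulr_natl.
  rewrite sumrB big_split /= -!mulr_sumr sumr_const_nat subn0 -mulr_suml.
  rewrite -[_ *+ k]mulr_natl -mulr_sumr; ring.
lra.
Qed.

Lemma lower (R : realType) (V : finType) (e : rel V) (x y : V -> R) (pr ac : V -> option V) a p :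
  round e x pr ac y -> symmetric e -> path e a p -> x (last a p) <= x a ->
  (forall p', path e a p' -> last a p' = last a p -> (size p <= size p')%N) ->
  (x a - x (last a p)) ^+ 2 <= 12 * (size p)%:R * \sum_v inn x ac v ^+ 2.
Proof.
move=> Hr sym hp hab hmin.
have Hr' := Hr; case: Hr' => H1 [H2 [H3 [H4 _]]].
set k := size p; set u := fun i => nth a (a :: p) i.
set c := fun i => match pr (u i) with Some v => inn x ac v | None => 0 end.
have Hc0 : forall i, 0 <= c i.
  by move=> i; rewrite /c; case: (pr (u i)) => [v|] //; apply: inn_ge0 Hr v.
have Hg : forall i, (i < k)%N -> x (u i) - x (u i.+1) <= 2 * c i.
  move=> i hi.
  have eu : e (u i) (u i.+1) by apply: (pathP a hp).
  rewrite /c; case E: (pr (u i)) => [v|].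
    case Ev: (ac v) => [w|]; last first.
      by exfalso; apply: (H3 v); [exists (u i) | ].
    have [_ Hmax] := H4 v w Ev.
    have := Hmax (u i) E; have := (H2 (u i) v E).2 (u i.+1) eu.
    rewrite /inn Ev; lra.
  case: (ltrP (x (u i.+1)) (x (u i))) => h; last lra.
  by exfalso; apply: ((H1 (u i)).1); [exists (u i.+1) | rewrite E].
have Htel : x a - x (last a p) = \sum_(0 <= i < k) (x (u i) - x (u i.+1)).
  have := telescope_sumr (fun i => - x (u i)) (leq0n k).
  have -> : u 0%N = a by [].
  have -> : u k = last a p by rewrite /u (last_nth a).
  move=> H; rewrite (_ : x a - x (last a p) = - x (last a p) - - x a); last ring.
  rewrite -H; apply: eq_bigr => i _; ring.
have Hsum : x a - x (last a p) <= 2 * \sum_(0 <= i < k) c i.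
  rewrite Htel mulr_sumr; apply: ler_sum_nat => i /andP [_ hi]; exact: Hg.
have Hcs := @CS R c k.
have H3c : \sum_(0 <= i < k) c i ^+ 2 <= 3 * \sum_v inn x ac v ^+ 2.
  have -> : \sum_(0 <= i < k) c i ^+ 2 =
     \sum_(0 <= i < k) \sum_v ((pr (u i) == Some v)%:R * inn x ac v ^+ 2).
    apply: eq_bigr => i _; rewrite /c; case E: (pr (u i)) => [v0|].
      rewrite (single (v0:=v0)) ?eqxx ?mul1r // => v nv.
      by rewrite (_ : (Some v0 == Some v) = false) ?mul0r //; apply/eqP => -[Ev]; rewrite Ev eqxx in nv.
    by rewrite big1 ?expr0n // => v _; rewrite mul0r.
  rewrite exchange_big /= mulr_sumr; apply: ler_sum => v _.
  under eq_bigr do rewrite mulrC.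
  rewrite -mulr_sumr mulrC; apply: ler_wpM2r; first by rewrite sqr_ge0.
  set Q := fun i => pr (u i) == Some v.
  have -> : \sum_(0 <= i < k) ((pr (u i) == Some v)%:R : R) = (count Q (iota 0 k))%:R.
    rewrite -(@natr_sum R) /index_iota subn0 -sum1_count [X in _ = X%:R]big_mkcond /=.
    by congr (_ %:R); apply: eq_bigr => i _; rewrite /Q; case: (pr (u i) == Some v).
  rewrite ler_nat; apply: count3 => i j hij hj /eqP Qi /eqP Qj.
  have [p' [h1 h2 h3]] := @shortcut V e a p v i j sym hp hij (ltnW hj) (@pr_edge R V e x pr ac y Hr _ _ Qi) (@pr_edge R V e x pr ac y Hr _ _ Qj).
  by have := hmin p' h1 h2; rewrite leqNgt h3.
have k0 : 0 <= k%:R :> R by [].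
have hS : 0 <= \sum_v inn x ac v ^+ 2 by rewrite sumr_ge0 // => v _; rewrite sqr_ge0.
have hc2 : 0 <= \sum_(0 <= i < k) c i ^+ 2 by rewrite sumr_ge0 // => v _; rewrite sqr_ge0.
have hab0 : 0 <= x a - x (last a p) by lra.
have : (x a - x (last a p)) ^+ 2 <= 4 * (\sum_(0 <= i < k) c i) ^+ 2 by nra.
nra.
Qed.

Lemma step (R : realType) (V : finType) (e : rel V) (x y : V -> R) (pr ac : V -> option V) D :
  round e x pr ac y -> symmetric e -> (0 < #|V|)%N -> (forall u v, dist_le e u v D) ->
  Phi y <= (1 - ((2 * #|V| * D + 1)%:R)^-1) * Phi x.
Proof.
move=> Hr sym n0 Hd.
have [i0 _] : exists i, i \in V by apply/card_gt0P.
have [a [b [Ha Hb]]] := extr x i0.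
have [p [hp hl hs hmin]] := @minpath V e a b D (Hd a b).
have Hlow := @lower R V e x y pr ac a p Hr sym hp.
rewrite hl in Hlow; have {}Hlow := Hlow (Hb a) hmin.
have Hdrop := @drop_sq R V e x pr ac y Hr.
have Hsy := @sum_y R V e x pr ac y Hr.
have HPy : Phi y = Phi x - (\sum_u x u ^+ 2 - \sum_u y u ^+ 2) by rewrite /Phi Hsy; ring.
have HPle := Phi_le n0 Ha Hb.
have P0x := Phi_ge0 x n0; have P0y := Phi_ge0 y n0.
set S := \sum_v inn x ac v ^+ 2 in Hlow Hdrop.
set d := \sum_u x u ^+ 2 - \sum_u y u ^+ 2 in HPy Hdrop.
set K := (x a - x b) ^+ 2 in Hlow HPle.
set nR := #|V|%:R in HPle.
have nR0 : 0 <= nR by [].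
have kD : (size p)%:R <= D%:R :> R by rewrite ler_nat.
have k0 : 0 <= (size p)%:R :> R by [].
have S0 : 0 <= S by rewrite /S sumr_ge0 // => v _; rewrite sqr_ge0.
have h1 : nR * K <= nR * (12 * (size p)%:R * S) by apply: ler_wpM2l.
have h2 : nR * ((size p)%:R * S) <= nR * (D%:R * S) by apply: ler_wpM2l => //; apply: ler_wpM2r.
have D0 : 0 <= D%:R :> R by [].
have h4 : nR * (D%:R * S) <= nR * (D%:R * (d / 2)).
  by apply: ler_wpM2l => //; apply: ler_wpM2l => //; lra.
have h3 : 2 * Phi x <= 3 * (nR * D%:R) * d.
  have E1 : nR * (12 * (size p)%:R * S) = 12 * (nR * ((size p)%:R * S)) by ring.
  have E2 : nR * (D%:R * (d / 2)) = (nR * D%:R) * d / 2 by ring.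
  lra.
have nD0 : 0 <= nR * D%:R by apply: mulr_ge0.
have -> : (2 * #|V| * D + 1)%:R = 2 * (nR * D%:R) + 1 :> R by rewrite natrD !natrM mulrA.
set N := 2 * (nR * D%:R) + 1.
have N0 : 0 < N by rewrite /N; lra.
rewrite HPy mulrBl mul1r lerD2l lerN2 mulrC -/(Phi x / N) ler_pdivrMr //.
rewrite /N; nra.
Qed.

Theorem theorem1 (R : realType) (V : finType) (e : rel V) :
  symmetric e -> irreflexive e -> (forall u v : V, connect e u v) ->
  (forall (x : nat -> V -> R) (pr ac : nat -> V -> option V),
     (forall v, 0 <= x 0%N v) -> execution e x pr ac -> monotonic x pr ac) /\
  (forall (D : nat) (x : nat -> V -> R) (pr ac : nat -> V -> option V) (eps : R),
     (2 <= #|V|)%N -> is_diameter e D ->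
     (forall v, 0 <= x 0%N v) -> 0 < disc (x 0%N) -> 0 < eps ->
     execution e x pr ac ->
     forall t : nat,
       (2 * #|V| * D + 1)%:R *
         @ln R ((Num.ceil (2 * #|V|%:R * disc (x 0%N) ^+ 2 / eps ^+ 2))%:~R : R)
         <= t%:R ->
       disc (x t) <= eps).
Proof.
move=> sym irr conn; split.
  move=> x pr ac _ Hex; split; [|split].
  - by move=> t u v E _; apply: (@pr_lt R V e (x t) (pr t) (ac t) (x t.+1) (Hex t) u v E).
  - move=> t w; have Hr := Hex t.
    exists (match ac t w with Some w' => w' | None => w end).
    rewrite (@y_eq R V e (x t) (pr t) (ac t) (x t.+1) Hr w).
    have := @out_ge0 R V e (x t) (pr t) (ac t) (x t.+1) Hr w.
    rewrite /inn; case E: (ac t w) => [w'|].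
      have := @ac_lt R V e (x t) (pr t) (ac t) (x t.+1) Hr w w' E; lra.
    lra.
  - move=> t w; have Hr := Hex t.
    exists (match pr t w with Some v => v | None => w end).
    rewrite (@y_eq R V e (x t) (pr t) (ac t) (x t.+1) Hr w).
    have := @inn_ge0 R V e (x t) (pr t) (ac t) (x t.+1) Hr w.
    rewrite /out; case E: (pr t w) => [v|]; last lra.
    have := @pr_lt R V e (x t) (pr t) (ac t) (x t.+1) Hr w v E.
    case: ifP => _; lra.
move=> D x pr ac eps n2 [Hd _] _ K0 eps0 Hex t Ht.
have n0 : (0 < #|V|)%N by lia.
set nR : R := #|V|%:R.
have nR0 : 0 < nR :> R by rewrite ltr0n.
set N2 : R := (2 * #|V| * D + 1)%:R.
have N20 : 0 < N2 by rewrite ltr0n; lia.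
set al := N2^-1.
have al0 : 0 < al by rewrite invr_gt0.
have Hdec : forall s, Phi (x s) <= Phi (x 0%N) * expR (- (s%:R * al)).
  elim=> [|s IH]; first by rewrite mul0r oppr0 expR0 mulr1.
  have Hs := @step R V e (x s) (x s.+1) (pr s) (ac s) D (Hex s) sym n0 Hd.
  have P0 := Phi_ge0 (x s) n0.
  have Hexp : 1 - al <= expR (- al) by have := expR_ge1Dx (- al); lra.
  have E : expR (- (s.+1%:R * al)) = expR (- (s%:R * al)) * expR (- al).
    by rewrite -expRD -addn1 natrD mulrDl mul1r opprD.
  rewrite E; apply: (le_trans Hs).
  have : (1 - al) * Phi (x s) <= expR (- al) * Phi (x s) by apply: ler_wpM2r.
  have : expR (- al) * Phi (x s) <= expR (- al) * (Phi (x 0%N) * expR (- (s%:R * al))).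
    by apply: ler_wpM2l => //; apply: ltW; apply: expR_gt0.
  move=> h1 h2; apply: (le_trans h2); apply: (le_trans h1); rewrite le_eqVlt; apply/orP; left; apply/eqP; ring.
rewrite leNgt; apply/negP => Hgt.
have [i0 _] : exists i, i \in V by apply/card_gt0P.
have [a [b [Ha Hb]]] := extr (x t) i0.
have Dt := disc_eq Ha Hb.
have ab : a != b by apply/eqP => E; move: Hgt; rewrite Dt E subrr; lra.
have Pge := Phi_ge (x t) n0 ab.
have [a0 [b0 [Ha0 Hb0]]] := extr (x 0%N) i0.
have D0 := disc_eq Ha0 Hb0.
have P0le := Phi_le n0 Ha0 Hb0.
rewrite -D0 in P0le.
set K := disc (x 0%N) in P0le Ht K0.
set Z := 2 * nR * K ^+ 2 / eps ^+ 2 in Ht.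
set N : R := (Num.ceil Z)%:~R in Ht.
have Z0 : 0 < Z by rewrite /Z divr_gt0 // ?exprn_gt0 // !mulr_gt0 // exprn_gt0.
have ZN : Z <= N by apply: ceil_ge.
have N0 : 0 < N by lra.
have lnt : ln N <= t%:R * al.
  by rewrite ler_pdivlMr // mulrC.
have Hexp : expR (- (t%:R * al)) <= N^-1.
  by rewrite -(lnK (N0 : N \in Num.pos)) -expRN ler_expR lerN2.
have Pt := Hdec t.
have Pt0 := Phi_ge0 (x t) n0.
have PP0 := Phi_ge0 (x 0%N) n0.
have h1 : Phi (x t) <= Phi (x 0%N) / N.
  apply: (le_trans Pt); apply: ler_wpM2l => //.
have h2 : Phi (x t) * Z <= Phi (x 0%N).
  have : Phi (x t) * N <= Phi (x 0%N) by rewrite -ler_pdivlMr.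
  have : Phi (x t) * Z <= Phi (x t) * N by apply: ler_wpM2l.
  lra.
have M0 : 0 < nR * K ^+ 2 by rewrite mulr_gt0 // exprn_gt0.
have h3 : Phi (x t) * 8 <= eps ^+ 2.
  have E : Phi (x t) * Z = (Phi (x t) * 8) * (nR * K ^+ 2) / (4 * eps ^+ 2).
    by rewrite /Z; field; rewrite gt_eqF // exprn_gt0.
  rewrite E in h2.
  have : Phi (x t) * 8 * (nR * K ^+ 2) <= eps ^+ 2 * (nR * K ^+ 2).
    have e0 : 0 < 4 * eps ^+ 2 by rewrite mulr_gt0 // exprn_gt0.
    rewrite ler_pdivrMr // in h2.
    nra.
  move=> h. by rewrite -(ler_pM2r M0).
rewrite -Dt in Pge.
nra.
Qed.
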